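(* Let $S>0$, $\zeta\in\{0,1\}$, $\phi\in(-1,1)$, and let $(u_n)_{n\in\mathbb{N}}$ be the $\phi$-market impact scenario defined below. Then there exists $R>0$ such that for all $x\in(-R,R)$ the scenario is regular ($N(x)=+\infty$ where $N(x)=\inf\{n: s_n(x)=-S\}$), the function $x\mapsto\sum_{n\ge0}u_n(x)$ is given by a power series on $(-R,R)$ (in particular it is $\mathcal{C}^\infty$ there), and $$\sum_{n=0}^{+\infty}u_n(x)=\frac{1}{1-\phi}\,x+\frac{1}{S}\,\frac{(1+\zeta)\phi}{(1-\phi)^3(1+\phi)}\,x^2+o(x^2)\quad\text{as }x\to0.$$
   Context: Fix $S>0$, $\zeta\in\{0,1\}$ and $\phi\in\mathbb{R}$. For $a,b\in\mathbb{R}$ write $a\vee b=\max(a,b)$. The $\phi$-market impact scenario starting from $x\in\mathbb{R}$ is the sequence of real-valued functions $(u_n)_{n\in\mathbb{N}}$ defined by $u_0(x)=x\vee(-S)$ and, for all $n\in\mathbb{N}$, $u_{n+1}(x)=\Big(\phi\big(1+\tfrac{s_n(x)}{S}\big)^{1+\zeta}u_n(x)\Big)\vee\big(-s_n(x)-S\big)$, where $s_n(x)=\sum_{k=0}^n u_k(x)$. *)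

(* Defs.v *)
From Stdlib Require Import Reals.
Open Scope R_scope.

(* us S zeta phi x n = (u_n(x), s_n(x)) for the phi-market impact scenario,
   with zeta : nat (intended to be 0 or 1). *)
Fixpoint us (S : R) (zeta : nat) (phi x : R) (n : nat) : R * R :=
  match n with
  | O => let u0 := Rmax x (- S) in (u0, u0)
  | Datatypes.S m =>
      let p := us S zeta phi x m in
      let u := fst p in
      let s := snd p in
      let u' := Rmax (phi * (1 + s / S) ^ (1 + zeta) * u) (- s - S) in
      (u', s + u')
  end.

Definition u_sc (S : R) (zeta : nat) (phi : R) (n : nat) (x : R) : R :=
  fst (us S zeta phi x n).

Definition s_sc (S : R) (zeta : nat) (phi : R) (n : nat) (x : R) : R :=
  snd (us S zeta phi x n).

Definition regular (S : R) (zeta : nat) (phi x : R) : Prop :=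
  forall n : nat, s_sc S zeta phi n x <> - S.

(* Main.v *)
Require Import Defs.
From Stdlib Require Import Reals Lra Lia.
From Coquelicot Require Import Coquelicot.
Open Scope R_scope.

Lemma is_series_R_scal (c : R) (a : nat -> R) (l : R) :
  is_series a l -> is_series (fun n => c * a n) (c * l).
Proof. intro H. exact (is_series_scal c a l H). Qed.

Lemma is_series_R_plus (a b : nat -> R) (la lb : R) :
  is_series a la -> is_series b lb -> is_series (fun n => a n + b n) (la + lb).
Proof. intros H1 H2. exact (is_series_plus a b la lb H1 H2). Qed.

Lemma ex_series_R_le (a b : nat -> R) :
  (forall n, Rabs (a n) <= b n) -> ex_series b -> ex_series a.
Proof. intros H1 H2. apply (ex_series_le a b); auto. Qed.

Lemma Series_zero : Series (fun _ => 0) = 0.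
Proof.
  rewrite (Series_ext (fun _ => 0) (fun n => 0 * 0)) by (intros; ring).
  rewrite Series_scal_l. ring.
Qed.

Lemma Series_nonneg (a : nat -> R) : (forall n, 0 <= a n) -> ex_series a -> 0 <= Series a.
Proof.
  intros H E. rewrite <- Series_zero. apply Series_le; auto. intros; split; auto; lra.
Qed.

Lemma sum_le_Series (a : nat -> R) (N : nat) :
  (forall n, 0 <= a n) -> ex_series a -> sum_f_R0 a N <= Series a.
Proof.
  intros H E. rewrite (Series_incr_n a (S N)) by (lia || auto). simpl.
  assert (0 <= Series (fun k => a (S (N + k)))).
  { apply Series_nonneg; auto. apply (ex_series_incr_n a (S N)) in E. exact E. }
  lra.
Qed.

Lemma term_le_Series (a : nat -> R) (N : nat) :
  (forall n, 0 <= a n) -> ex_series a -> a N <= Series a.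
Proof.
  intros H E. eapply Rle_trans; [|apply (sum_le_Series a N H E)].
  destruct N; simpl. lra. pose proof (cond_pos_sum a N H). lra.
Qed.
Definition wt (r : R) (c : nat -> R) (k : nat) := Rabs (c k) * r ^ k.
Definition nb (r : R) (c : nat -> R) (M : R) := ex_series (wt r c) /\ Series (wt r c) <= M.
Definition ev (c : nat -> R) (x : R) := Series (fun k => c k * x ^ k).

Lemma wt_nonneg r c k : 0 <= r -> 0 <= wt r c k.
Proof. intro. unfold wt. apply Rmult_le_pos. apply Rabs_pos. apply pow_le; auto. Qed.

Lemma nb_M_nonneg r c M : 0 <= r -> nb r c M -> 0 <= M.
Proof. intros Hr [E H]. pose proof (Series_nonneg _ (fun k => wt_nonneg r c k Hr) E). lra. Qed.

Lemma abs_term_le r c x k : Rabs x <= r -> Rabs (c k * x ^ k) <= wt r c k.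
Proof.
  intro Hx. unfold wt. rewrite Rabs_mult, <- RPow_abs.
  apply Rmult_le_compat_l. apply Rabs_pos. apply pow_incr. split; auto. apply Rabs_pos.
Qed.

Lemma ev_ex r c M x : Rabs x <= r -> nb r c M -> ex_series (fun k => Rabs (c k * x ^ k)).
Proof.
  intros Hx [E _]. apply (ex_series_R_le _ (wt r c)); auto.
  intro n. rewrite Rabs_Rabsolu. apply abs_term_le; auto.
Qed.

Lemma ev_correct r c M x : Rabs x <= r -> nb r c M -> is_series (fun k => c k * x ^ k) (ev c x).
Proof. intros Hx H. apply Series_correct. apply ex_series_Rabs. eapply ev_ex; eauto. Qed.

Lemma ev_bd r c M x : Rabs x <= r -> nb r c M -> Rabs (ev c x) <= M.
Proof.
  intros Hx H. pose proof (ev_ex r c M x Hx H) as E. unfold ev.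
  eapply Rle_trans. apply Series_Rabs; auto.
  destruct H as [E2 H2]. eapply Rle_trans; [|exact H2].
  apply Series_le; auto. intro n. split. apply Rabs_pos. apply abs_term_le; auto.
Qed.

Lemma nb_plus r c d M1 M2 : 0 <= r -> nb r c M1 -> nb r d M2 -> nb r (fun k => c k + d k) (M1 + M2).
Proof.
  intros Hr [E1 H1] [E2 H2].
  assert (Hle : forall n, 0 <= wt r (fun k => c k + d k) n <= wt r c n + wt r d n).
  { intro n. split. apply wt_nonneg; auto. unfold wt. rewrite <- Rmult_plus_distr_r.
    apply Rmult_le_compat_r. apply pow_le; auto. apply Rabs_triang. }
  assert (E : ex_series (fun n => wt r c n + wt r d n)).
  { exists (Series (wt r c) + Series (wt r d)). apply is_series_R_plus; apply Series_correct; auto. }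
  split. apply (ex_series_R_le _ (fun n => wt r c n + wt r d n)); auto. intro n. rewrite Rabs_pos_eq; apply Hle.
  eapply Rle_trans. apply (Series_le _ (fun n => wt r c n + wt r d n)); auto. rewrite Series_plus; auto. lra.
Qed.

Lemma nb_scal r c M a : 0 <= r -> nb r c M -> nb r (fun k => a * c k) (Rabs a * M).
Proof.
  intros Hr [E H].
  assert (Heq : forall n, wt r (fun k => a * c k) n = Rabs a * wt r c n).
  { intro n; unfold wt; rewrite Rabs_mult; ring. }
  split.
  - eapply ex_series_ext. intro n; symmetry; apply Heq.
    exists (Rabs a * Series (wt r c)). apply is_series_R_scal, Series_correct; auto.
  - rewrite (Series_ext _ _ Heq), Series_scal_l. apply Rmult_le_compat_l; auto. apply Rabs_pos.
Qed.

Lemma ev_plus r c d M1 M2 x : Rabs x <= r -> nb r c M1 -> nb r d M2 ->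
  ev (fun k => c k + d k) x = ev c x + ev d x.
Proof.
  intros Hx H1 H2. unfold ev. apply is_series_unique.
  eapply is_series_ext. 2: apply is_series_R_plus; [apply (ev_correct r c M1)|apply (ev_correct r d M2)]; auto.
  intro n; simpl; ring.
Qed.

Lemma ev_scal r c M a x : Rabs x <= r -> nb r c M -> ev (fun k => a * c k) x = a * ev c x.
Proof.
  intros Hx H1. unfold ev. apply is_series_unique.
  eapply is_series_ext. 2: apply is_series_R_scal; apply (ev_correct r c M); auto.
  intro n; simpl; ring.
Qed.

Lemma sum_pow_split (c d : nat -> R) (x : R) (n : nat) :
  sum_f_R0 (fun i => c i * x ^ i * (d (n - i)%nat * x ^ (n - i))) n
  = sum_f_R0 (fun i => c i * d (n - i)%nat) n * x ^ n.
Proof.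
  rewrite Rmult_comm, scal_sum. apply sum_eq. intros i Hi.
  replace (x ^ n) with (x ^ i * x ^ (n - i)).
  ring. rewrite <- pow_add. f_equal. lia.
Qed.

Lemma wt_mul r c d n : 0 <= r ->
  wt r (PS_mult c d) n <= PS_mult (wt r c) (wt r d) n.
Proof.
  intro Hr. unfold wt, PS_mult.
  rewrite (sum_pow_split (fun i => Rabs (c i)) (fun i => Rabs (d i)) r n).
  apply Rmult_le_compat_r. apply pow_le; auto.
  eapply Rle_trans. apply sum_f_R0_triangle. right. apply sum_eq; intros. apply Rabs_mult.
Qed.

Lemma nb_mul r c d M1 M2 : 0 <= r -> nb r c M1 -> nb r d M2 -> nb r (PS_mult c d) (M1 * M2).
Proof.
  intros Hr [E1 H1] [E2 H2].
  assert (Hn : forall c n, Rabs (wt r c n) = wt r c n) by (intros; apply Rabs_pos_eq, wt_nonneg; auto).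
  assert (HS : is_series (PS_mult (wt r c) (wt r d)) (Series (wt r c) * Series (wt r d))).
  { apply is_series_mult; try apply Series_correct; auto;
    eapply ex_series_ext; try (intro n; symmetry; apply Hn); auto. }
  assert (Hle : forall n, 0 <= wt r (PS_mult c d) n <= PS_mult (wt r c) (wt r d) n).
  { intro n; split. apply wt_nonneg; auto. apply wt_mul; auto. }
  assert (E : ex_series (PS_mult (wt r c) (wt r d))) by (eexists; eauto).
  split. apply (ex_series_R_le _ (PS_mult (wt r c) (wt r d))); auto. intro n. rewrite Rabs_pos_eq; apply Hle.
  eapply Rle_trans. apply (Series_le _ (PS_mult (wt r c) (wt r d))); auto.
  rewrite (is_series_unique _ _ HS).
  pose proof (Series_nonneg _ (fun k => wt_nonneg r c k Hr) E1).
  pose proof (Series_nonneg _ (fun k => wt_nonneg r d k Hr) E2).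
  apply Rmult_le_compat; auto.
Qed.

Lemma ev_mul r c d M1 M2 x : Rabs x <= r -> nb r c M1 -> nb r d M2 ->
  ev (PS_mult c d) x = ev c x * ev d x.
Proof.
  intros Hx H1 H2. unfold ev. apply is_series_unique.
  eapply is_series_ext.
  2: apply is_series_mult; [apply (ev_correct r c M1)|apply (ev_correct r d M2)| eapply ev_ex; eauto | eapply ev_ex; eauto]; auto.
  intro n. simpl. unfold PS_mult. apply sum_pow_split.
Qed.

Definition one (k : nat) : R := if Nat.eqb k 0 then 1 else 0.
Definition cX (k : nat) : R := if Nat.eqb k 1 then 1 else 0.

Lemma is_series_first (a : nat -> R) : (forall k, a (S k) = 0) -> is_series a (a 0%nat).
Proof.
  intro H. apply is_series_Reals. intros eps Heps. exists 0%nat. intros n Hn.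
  unfold R_dist. replace (sum_f_R0 a n) with (a 0%nat). rewrite Rminus_diag, Rabs_R0; auto.
  induction n. reflexivity. simpl. rewrite H, <- IHn. ring. lia.
Qed.

Lemma nb_one r : 0 <= r -> nb r one 1.
Proof.
  intro Hr. assert (H : is_series (wt r one) (wt r one 0%nat)) by (apply is_series_first; intro; unfold wt, one; simpl; rewrite Rabs_R0; ring).
  split. eexists; eauto. rewrite (is_series_unique _ _ H). unfold wt, one; simpl. rewrite Rabs_R1. lra.
Qed.

Lemma ev_one x : ev one x = 1.
Proof.
  unfold ev. apply is_series_unique.
  replace 1 with (one 0%nat * x ^ 0) by (unfold one; simpl; ring).
  apply is_series_first. intro; unfold one; simpl; ring.
Qed.

Lemma is_series_second (a : nat -> R) : (forall k, a (S (S k)) = 0) -> is_series a (a 0%nat + a 1%nat).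
Proof.
  intro H. apply is_series_Reals. intros eps Heps. exists 1%nat. intros n Hn.
  unfold R_dist. replace (sum_f_R0 a n) with (a 0%nat + a 1%nat). rewrite Rminus_diag, Rabs_R0; auto.
  induction n. lia. destruct n. reflexivity. simpl. rewrite H. simpl in IHn. rewrite IHn. ring. lia.
Qed.

Lemma nb_X r : 0 <= r -> nb r cX r.
Proof.
  intro Hr. assert (H : is_series (wt r cX) (wt r cX 0%nat + wt r cX 1%nat)) by (apply is_series_second; intro; unfold wt, cX; simpl; rewrite Rabs_R0; ring).
  split. eexists; eauto. rewrite (is_series_unique _ _ H). unfold wt, cX; simpl. rewrite Rabs_R1, Rabs_R0. lra.
Qed.

Lemma ev_X x : ev cX x = x.
Proof.
  unfold ev. apply is_series_unique.
  assert (H := is_series_second (fun k => cX k * x ^ k)). cbv beta in H.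
  replace (cX 0%nat * x ^ 0 + cX 1%nat * x ^ 1) with x in H by (unfold cX; simpl; ring).
  apply H. intro; unfold cX; simpl; ring.
Qed.

Fixpoint ppow (c : nat -> R) (m : nat) : nat -> R :=
  match m with O => one | S m' => PS_mult c (ppow c m') end.

Lemma nb_pow r c M m : 0 <= r -> nb r c M -> nb r (ppow c m) (M ^ m).
Proof.
  intros Hr H. induction m; simpl. apply nb_one; auto. apply nb_mul; auto.
Qed.

Lemma ev_pow r c M m x : Rabs x <= r -> nb r c M -> ev (ppow c m) x = ev c x ^ m.
Proof.
  intros Hx H. assert (0 <= r) by (pose proof (Rabs_pos x); lra).
  induction m; simpl. apply ev_one. rewrite (ev_mul r c (ppow c m) M (M ^ m)); auto.
  rewrite IHm; auto. apply nb_pow; auto.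
Qed.

Lemma nb_mono r c M M' : nb r c M -> M <= M' -> nb r c M'.
Proof. intros [E H] HM. split; auto. lra. Qed.

Definition Tc (SS : R) (s : nat -> R) (k : nat) : R := one k + / SS * s k.

Fixpoint US (SS : R) (zeta : nat) (phi : R) (n : nat) : (nat -> R) * (nat -> R) :=
  match n with
  | O => (cX, cX)
  | Datatypes.S m =>
      let p := US SS zeta phi m in
      let u' := fun k => phi * PS_mult (ppow (Tc SS (snd p)) (1 + zeta)) (fst p) k in
      (u', fun k => snd p k + u' k)
  end.

Definition Uc SS zeta phi n := fst (US SS zeta phi n).
Definition Sc SS zeta phi n := snd (US SS zeta phi n).

Lemma us_succ SS zeta phi x n :
  us SS zeta phi x (Datatypes.S n) =
  (Rmax (phi * (1 + s_sc SS zeta phi n x / SS) ^ (1 + zeta) * u_sc SS zeta phi n x)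
        (- s_sc SS zeta phi n x - SS),
   s_sc SS zeta phi n x + Rmax (phi * (1 + s_sc SS zeta phi n x / SS) ^ (1 + zeta) * u_sc SS zeta phi n x)
        (- s_sc SS zeta phi n x - SS)).
Proof. reflexivity. Qed.

Lemma main_inv SS zeta phi r q d :
  0 < SS -> 0 < r -> 0 < q < 1 -> 0 <= d < 1 ->
  Rabs phi * (1 + d) ^ (1 + zeta) <= q -> r / (1 - q) <= SS * d ->
  forall n,
    nb r (Uc SS zeta phi n) (r * q ^ n) /\
    nb r (Sc SS zeta phi n) (r * (1 - q ^ (Datatypes.S n)) / (1 - q)) /\
    forall x, Rabs x <= r ->
      u_sc SS zeta phi n x = ev (Uc SS zeta phi n) x /\
      s_sc SS zeta phi n x = ev (Sc SS zeta phi n) x.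
Proof.
  intros HS Hr Hq Hd Hphi HrB.
  assert (Hr0 : 0 <= r) by lra.
  assert (Hsb : forall n, r * (1 - q ^ n) / (1 - q) <= SS * d).
  { intro n. eapply Rle_trans; [|exact HrB]. unfold Rdiv. apply Rmult_le_compat_r.
    apply Rlt_le, Rinv_0_lt_compat; lra. pose proof (pow_le q n). nra. }
  assert (HrS : r < SS).
  { assert (r <= r / (1 - q)). { apply (Rmult_le_reg_r (1 - q)). lra. field_simplify; nra. }
    nra. }
  induction n.
  - unfold Uc, Sc; simpl. split. apply (nb_mono _ _ r). apply nb_X; auto. lra.
    split. apply (nb_mono _ _ r). apply nb_X; auto. right; field; lra.
    intros x Hx. unfold u_sc, s_sc; simpl. rewrite ev_X.
    assert (x > - SS) by (apply Rabs_le_between in Hx; lra).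
    rewrite Rmax_left by lra. auto.
  - destruct IHn as [HU [HSn Hev]].
    set (Mu := r * q ^ n) in *. set (Ms := r * (1 - q ^ Datatypes.S n) / (1 - q)) in *.
    assert (HT : nb r (Tc SS (Sc SS zeta phi n)) (1 + d)).
    { apply (nb_mono _ _ (1 + Rabs (/ SS) * Ms)). apply nb_plus; auto. apply nb_one; auto.
      apply nb_scal; auto. rewrite Rabs_pos_eq by (apply Rlt_le, Rinv_0_lt_compat; lra).
      assert (Ms <= SS * d) by apply Hsb.
      assert (/ SS * Ms <= / SS * (SS * d)). { apply Rmult_le_compat_l; auto. apply Rlt_le, Rinv_0_lt_compat; lra. }
      replace (/ SS * (SS * d)) with d in * by (field; lra). lra. }
    assert (HP := nb_pow r _ _ (1 + zeta) Hr0 HT).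
    assert (HU' : nb r (Uc SS zeta phi (Datatypes.S n)) (r * q ^ Datatypes.S n)).
    { apply (nb_mono _ _ (Rabs phi * ((1 + d) ^ (1 + zeta) * Mu))).
      apply nb_scal; auto. apply nb_mul; auto.
      unfold Mu. assert (0 <= r * q ^ n) by (apply Rmult_le_pos; auto; apply pow_le; lra).
      replace (Rabs phi * ((1 + d) ^ (1 + zeta) * (r * q ^ n))) with ((Rabs phi * (1 + d) ^ (1 + zeta)) * (r * q ^ n)) by ring.
      replace (r * q ^ Datatypes.S n) with (q * (r * q ^ n)) by (simpl; ring).
      apply Rmult_le_compat_r; auto. }
    assert (HS' : nb r (Sc SS zeta phi (Datatypes.S n)) (r * (1 - q ^ Datatypes.S (Datatypes.S n)) / (1 - q))).
    { apply (nb_mono _ _ (Ms + r * q ^ Datatypes.S n)). apply nb_plus; auto.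
      unfold Ms. right. simpl. field. lra. }
    split; auto. split; auto.
    intros x Hx. destruct (Hev x Hx) as [Eu Es].
    assert (Hv : ev (Uc SS zeta phi (Datatypes.S n)) x =
                 phi * (1 + s_sc SS zeta phi n x / SS) ^ (1 + zeta) * u_sc SS zeta phi n x).
    { change (Uc SS zeta phi (Datatypes.S n)) with (fun k => phi * PS_mult (ppow (Tc SS (Sc SS zeta phi n)) (1+zeta)) (Uc SS zeta phi n) k).
      rewrite (ev_scal r _ ((1 + d) ^ (1 + zeta) * Mu)); auto.
      2: apply nb_mul; auto.
      rewrite (ev_mul r _ _ ((1 + d) ^ (1 + zeta)) Mu); auto.
      rewrite (ev_pow r _ (1 + d)); auto. unfold Tc.
      rewrite (ev_plus r one _ 1 (Rabs (/ SS) * Ms)); auto.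
      2: apply nb_one; auto. 2: apply nb_scal; auto.
      rewrite (ev_scal r _ Ms); auto. rewrite ev_one, <- Eu, <- Es. unfold Rdiv. rewrite (Rmult_comm (s_sc SS zeta phi n x)). ring. }
    assert (Hs' : ev (Sc SS zeta phi (Datatypes.S n)) x =
                  s_sc SS zeta phi n x + phi * (1 + s_sc SS zeta phi n x / SS) ^ (1 + zeta) * u_sc SS zeta phi n x).
    { change (Sc SS zeta phi (Datatypes.S n)) with (fun k => Sc SS zeta phi n k + Uc SS zeta phi (Datatypes.S n) k).
      rewrite (ev_plus r _ _ Ms (r * q ^ Datatypes.S n)); auto. rewrite Hv, <- Es. reflexivity. }
    assert (Hb := ev_bd r _ _ x Hx HS'). rewrite Hs' in Hb.
    assert (Hb2 := Hsb (Datatypes.S (Datatypes.S n))).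
    assert (SS * d < SS) by nra.
    apply Rabs_le_between in Hb.
    unfold u_sc at 1, s_sc at 1. rewrite us_succ. cbn [fst snd].
    rewrite Rmax_left by lra. rewrite Hv, Hs'. auto.
Qed.

Lemma geom_dom (a : nat -> R) C q : 0 <= q < 1 ->
  (forall n, Rabs (a n) <= C * q ^ n) ->
  ex_series (fun n => Rabs (a n)) /\ ex_series a /\ Rabs (Series a) <= C / (1 - q).
Proof.
  intros Hq H.
  assert (Hg : is_series (fun n => C * q ^ n) (C * / (1 - q))).
  { apply is_series_R_scal, is_series_geom. rewrite Rabs_pos_eq; lra. }
  assert (E1 : ex_series (fun n => Rabs (a n))).
  { apply (ex_series_R_le _ (fun n => C * q ^ n)). intro n; rewrite Rabs_Rabsolu; auto. eexists; eauto. }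
  split; auto. split. apply ex_series_Rabs; auto.
  eapply Rle_trans. apply Series_Rabs; auto.
  replace (C / (1 - q)) with (C * / (1 - q)) by reflexivity. rewrite <- (is_series_unique _ _ Hg). apply Series_le. intro n; split; auto. apply Rabs_pos.
  eexists; eauto.
Qed.

Lemma Sc_sum SS zeta phi n k : Sc SS zeta phi n k = sum_f_R0 (fun j => Uc SS zeta phi j k) n.
Proof. induction n. reflexivity. simpl sum_f_R0. rewrite <- IHn. reflexivity. Qed.

Lemma s_sc_sum SS zeta phi n x : s_sc SS zeta phi n x = sum_f_R0 (fun j => u_sc SS zeta phi j x) n.
Proof. induction n. reflexivity. simpl sum_f_R0. rewrite <- IHn. unfold s_sc at 1, u_sc. rewrite us_succ. reflexivity. Qed.

Lemma coef_bd r c M k : 0 < r -> nb r c M -> Rabs (c k) <= M / r ^ k.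
Proof.
  intros Hr [E H]. assert (Hk : 0 < r ^ k) by (apply pow_lt; auto).
  assert (wt r c k <= M). { eapply Rle_trans; [|exact H]. apply term_le_Series; auto. intro; apply wt_nonneg; lra. }
  unfold wt in *. apply (Rmult_le_reg_r (r ^ k)); auto. unfold Rdiv. rewrite Rmult_assoc, Rinv_l; lra.
Qed.

Definition Acoef SS zeta phi (k : nat) := Series (fun n => Uc SS zeta phi n k).

Lemma pow_ratio M r x k : 0 < r -> M / r ^ k * Rabs x ^ k = M * (Rabs x / r) ^ k.
Proof.
  intro Hr. unfold Rdiv. rewrite Rpow_mult_distr, pow_inv. ring.
Qed.



Lemma limit_part SS zeta phi r q d :
  0 < SS -> 0 < r -> 0 < q < 1 -> 0 <= d < 1 ->
  Rabs phi * (1 + d) ^ (1 + zeta) <= q -> r / (1 - q) <= SS * d ->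
  (forall k, ex_series (fun n => Uc SS zeta phi n k) /\
             Rabs (Acoef SS zeta phi k) <= r / (1 - q) / r ^ k) /\
  (forall N k, Rabs (Acoef SS zeta phi k - Sc SS zeta phi N k) <= r * q ^ Datatypes.S N / (1 - q) / r ^ k) /\
  (forall x, Rabs x < r ->
     is_series (fun k => Acoef SS zeta phi k * x ^ k) (ev (Acoef SS zeta phi) x) /\
     infinite_sum (fun n => u_sc SS zeta phi n x) (ev (Acoef SS zeta phi) x)).
Proof.
  intros HS Hr Hq Hd Hphi HrB.
  pose proof (main_inv SS zeta phi r q d HS Hr Hq Hd Hphi HrB) as Inv.
  assert (Hu : forall n k, Rabs (Uc SS zeta phi n k) <= r / r ^ k * q ^ n).
  { intros n k. destruct (Inv n) as [HU _]. eapply Rle_trans. apply (coef_bd r _ _ k Hr HU).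
    right. unfold Rdiv. ring. }
  assert (Hrk : forall k, 0 < r ^ k) by (intro; apply pow_lt; auto).
  assert (HA : forall k, ex_series (fun n => Uc SS zeta phi n k) /\
             Rabs (Acoef SS zeta phi k) <= r / (1 - q) / r ^ k).
  { intro k. destruct (geom_dom _ (r / r ^ k) q (conj (Rlt_le _ _ (proj1 Hq)) (proj2 Hq)) (fun n => Hu n k)) as [_ [E B]].
    split; auto. unfold Acoef. eapply Rle_trans; [exact B|]. right. field. split; [lra|]. specialize (Hrk k); lra. }
  assert (HT : forall N k, Rabs (Acoef SS zeta phi k - Sc SS zeta phi N k) <= r * q ^ Datatypes.S N / (1 - q) / r ^ k).
  { intros N k. unfold Acoef. rewrite (Series_incr_n _ (Datatypes.S N)) by (lia || apply HA).
    simpl pred. rewrite Sc_sum.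
    replace (sum_f_R0 (fun n : nat => Uc SS zeta phi n k) N +
      Series (fun k0 : nat => Uc SS zeta phi (Datatypes.S N + k0) k) -
      sum_f_R0 (fun j : nat => Uc SS zeta phi j k) N) with
      (Series (fun k0 : nat => Uc SS zeta phi (Datatypes.S N + k0) k)) by ring.
    destruct (geom_dom (fun k0 => Uc SS zeta phi (Datatypes.S N + k0) k) (r / r ^ k * q ^ Datatypes.S N) q
      (conj (Rlt_le _ _ (proj1 Hq)) (proj2 Hq))) as [_ [_ B]].
    { intro j. eapply Rle_trans. apply Hu. rewrite pow_add. right; ring. }
    eapply Rle_trans; [exact B|]. right. field. split; [lra|]. specialize (Hrk k); lra. }
  split; auto. split; auto.
  intros x Hx.
  set (rho := Rabs x / r).
  assert (Hrho : 0 <= rho < 1).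
  { unfold rho. split. apply Rmult_le_pos. apply Rabs_pos. apply Rlt_le, Rinv_0_lt_compat; auto.
    apply (Rmult_lt_reg_r r); auto. unfold Rdiv. rewrite Rmult_assoc, Rinv_l; lra. }
  assert (HAx : is_series (fun k => Acoef SS zeta phi k * x ^ k) (ev (Acoef SS zeta phi) x)).
  { apply Series_correct.
    destruct (geom_dom (fun k => Acoef SS zeta phi k * x ^ k) (r / (1 - q)) rho Hrho) as [_ [E _]]; auto.
    intro k. rewrite Rabs_mult, <- RPow_abs. unfold rho. rewrite <- pow_ratio; auto.
    apply Rmult_le_compat_r. apply pow_le, Rabs_pos. apply HA. }
  split; auto.
  set (K := r / ((1 - q) * (1 - rho))).
  assert (HK : 0 < K). { unfold K. apply Rdiv_lt_0_compat; auto. apply Rmult_lt_0_compat; lra. }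
  assert (Hdiff : forall N, Rabs (sum_f_R0 (fun n => u_sc SS zeta phi n x) N - ev (Acoef SS zeta phi) x) <= K * q ^ Datatypes.S N).
  { intro N. rewrite <- s_sc_sum. destruct (Inv N) as [_ [HSN Hev]].
    destruct (Hev x (Rlt_le _ _ Hx)) as [_ ->].
    assert (HSx := ev_correct r _ _ x (Rlt_le _ _ Hx) HSN).
    unfold ev at 1 2. rewrite <- Series_minus.
    2: eexists; exact HSx. 2: eexists; exact HAx.
    destruct (geom_dom (fun k => Sc SS zeta phi N k * x ^ k - Acoef SS zeta phi k * x ^ k)
      (r * q ^ Datatypes.S N / (1 - q)) rho Hrho) as [_ [_ B]].
    { intro k. replace (Sc SS zeta phi N k * x ^ k - Acoef SS zeta phi k * x ^ k) with
        (- ((Acoef SS zeta phi k - Sc SS zeta phi N k) * x ^ k)) by ring.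
      rewrite Rabs_Ropp, Rabs_mult, <- RPow_abs. unfold rho. rewrite <- pow_ratio; auto.
      apply Rmult_le_compat_r. apply pow_le, Rabs_pos. apply HT. }
    eapply Rle_trans; [exact B|]. right. unfold K. field. lra. }
  intros eps Heps.
  destruct (pow_lt_1_zero q ltac:(rewrite Rabs_pos_eq; lra) (eps / K) ltac:(apply Rdiv_lt_0_compat; auto)) as [N0 HN0].
  exists N0. intros n Hn. unfold R_dist. eapply Rle_lt_trans. apply Hdiff.
  specialize (HN0 n Hn). rewrite Rabs_pos_eq in HN0 by (apply pow_le; lra).
  simpl. assert (q * q ^ n <= q ^ n) by (pose proof (pow_le q n); nra).
  apply (Rmult_lt_compat_l K) in HN0; auto. replace (K * (eps / K)) with eps in HN0 by (field; lra).
  nra.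
Qed.

Lemma coef01 SS zeta phi n :
  Uc SS zeta phi n 0 = 0 /\ Sc SS zeta phi n 0 = 0 /\
  Uc SS zeta phi n 1 = phi ^ n /\ Sc SS zeta phi n 1 = sum_f_R0 (fun j => phi ^ j) n.
Proof.
  assert (Hp : forall s m, s 0%nat = 0 -> ppow (Tc SS s) m 0%nat = 1 /\
                 ppow (Tc SS s) m 1%nat = INR m * (/ SS * s 1%nat)).
  { intros s m Hs. induction m. simpl. unfold one; simpl. split; ring.
    destruct IHm as [I0 I1]. simpl ppow. unfold PS_mult. simpl. rewrite I0, I1.
    unfold Tc, one; simpl. rewrite Hs. split; [ring|]. destruct m; simpl; ring. }
  induction n.
  - unfold Uc, Sc, cX; simpl. repeat split; ring.
  - destruct IHn as [U0 [S0 [U1 S1]]].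
    destruct (Hp (Sc SS zeta phi n) (1 + zeta)%nat S0) as [P0 P1].
    assert (E0 : Uc SS zeta phi (Datatypes.S n) 0 = 0).
    { change (Uc SS zeta phi (Datatypes.S n) 0) with (phi * PS_mult (ppow (Tc SS (Sc SS zeta phi n)) (1+zeta)) (Uc SS zeta phi n) 0).
      unfold PS_mult; simpl sum_f_R0. simpl minus. rewrite U0. ring. }
    assert (E1 : Uc SS zeta phi (Datatypes.S n) 1 = phi ^ Datatypes.S n).
    { change (Uc SS zeta phi (Datatypes.S n) 1) with (phi * PS_mult (ppow (Tc SS (Sc SS zeta phi n)) (1+zeta)) (Uc SS zeta phi n) 1).
      set (P := ppow (Tc SS (Sc SS zeta phi n)) (1 + zeta)) in *.
      unfold PS_mult; simpl sum_f_R0. simpl minus. rewrite U0, U1, P0. simpl. ring. }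
    split; auto. split.
    { change (Sc SS zeta phi (Datatypes.S n) 0) with (Sc SS zeta phi n 0 + Uc SS zeta phi (Datatypes.S n) 0).
      rewrite S0, E0; ring. }
    split; auto.
    change (Sc SS zeta phi (Datatypes.S n) 1) with (Sc SS zeta phi n 1 + Uc SS zeta phi (Datatypes.S n) 1).
    rewrite S1, E1. reflexivity.
Qed.

Lemma coef2 SS zeta phi n :
  Uc SS zeta phi (Datatypes.S n) 2 =
  phi * Uc SS zeta phi n 2 + phi * (INR (1 + zeta) * / SS) * Sc SS zeta phi n 1 * phi ^ n.
Proof.
  assert (Hp : forall s m, s 0%nat = 0 -> ppow (Tc SS s) m 0%nat = 1 /\
                 ppow (Tc SS s) m 1%nat = INR m * (/ SS * s 1%nat)).
  { intros s m Hs. induction m. simpl. unfold one; simpl. split; ring.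
    destruct IHm as [I0 I1]. simpl ppow. unfold PS_mult. simpl. rewrite I0, I1.
    unfold Tc, one; simpl. rewrite Hs. split; [ring|]. destruct m; simpl; ring. }
  destruct (coef01 SS zeta phi n) as [U0 [S0 [U1 S1]]].
  destruct (Hp (Sc SS zeta phi n) (1 + zeta)%nat S0) as [P0 P1].
  change (Uc SS zeta phi (Datatypes.S n) 2) with (phi * PS_mult (ppow (Tc SS (Sc SS zeta phi n)) (1+zeta)) (Uc SS zeta phi n) 2).
  set (P := ppow (Tc SS (Sc SS zeta phi n)) (1 + zeta)) in *.
  unfold PS_mult; simpl sum_f_R0. simpl minus. rewrite U0, U1, P0, P1. ring.
Qed.

Lemma A_vals SS zeta phi :
  0 < SS -> -1 < phi < 1 ->
  (forall k, ex_series (fun n => Uc SS zeta phi n k)) ->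
  Acoef SS zeta phi 0 = 0 /\ Acoef SS zeta phi 1 = / (1 - phi) /\
  Acoef SS zeta phi 2 = (1 / SS) * ((1 + INR zeta) * phi / ((1 - phi) ^ 3 * (1 + phi))).
Proof.
  intros HS Hphi HE.
  assert (Hap : Rabs phi < 1) by (apply Rabs_def1; lra).
  assert (Hap2 : Rabs (phi ^ 2) < 1) by (rewrite <- RPow_abs; simpl; rewrite Rmult_1_r; pose proof (Rabs_pos phi); nra).
  split.
  { unfold Acoef. rewrite (Series_ext _ (fun _ => 0)). apply Series_zero. intro n. apply coef01. }
  split.
  { unfold Acoef. rewrite (Series_ext _ (fun n => phi ^ n)). apply Series_geom; auto. intro n. apply coef01. }
  set (A2 := Acoef SS zeta phi 2).
  set (c := INR (1 + zeta) / (SS * (1 - phi))).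
  assert (HV : is_series (fun n => Uc SS zeta phi n 2) A2) by (apply Series_correct; auto).
  assert (HV1 : is_series (fun n => Uc SS zeta phi (Datatypes.S n) 2) (A2 - Uc SS zeta phi 0 2)).
  { apply (is_series_incr_1 (fun n => Uc SS zeta phi n 2)).
    match goal with |- is_series _ ?l => replace l with A2; [exact HV|] end.
    unfold plus; simpl. lra. }
  assert (HV0 : Uc SS zeta phi 0 2 = 0) by reflexivity.
  assert (HW : is_series (fun n => phi * Uc SS zeta phi n 2 + ((c * phi) * phi ^ n + (- (c * phi ^ 2)) * (phi ^ 2) ^ n))
                 (phi * A2 + ((c * phi) * / (1 - phi) + (- (c * phi ^ 2)) * / (1 - phi ^ 2)))).
  { apply is_series_R_plus. apply is_series_R_scal; auto.
    apply is_series_R_plus; apply is_series_R_scal; apply is_series_geom; auto. }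
  assert (Heq : forall n, Uc SS zeta phi (Datatypes.S n) 2 =
     phi * Uc SS zeta phi n 2 + ((c * phi) * phi ^ n + (- (c * phi ^ 2)) * (phi ^ 2) ^ n)).
  { intro n. rewrite coef2. destruct (coef01 SS zeta phi n) as [_ [_ [_ S1]]]. rewrite S1.
    rewrite tech3 by lra. unfold c. replace ((phi ^ 2) ^ n) with (phi ^ n * phi ^ n).
    simpl. field. split; lra.
    rewrite <- Rpow_mult_distr. f_equal. ring. }
  assert (HV1' := is_series_ext _ _ _ Heq HV1).
  pose proof (is_series_unique _ _ HV1') as U1. pose proof (is_series_unique _ _ HW) as U2.
  rewrite U1 in U2. rewrite HV0 in U2.
  assert (H1p : 1 - phi <> 0) by lra. assert (H1p' : 1 + phi <> 0) by lra.
  assert (H1p2 : 1 - phi ^ 2 <> 0) by (simpl; nra).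
  set (W := c * phi * / (1 - phi) + - (c * phi ^ 2) * / (1 - phi ^ 2)) in *.
  assert (HA : A2 * (1 - phi) = W).
  { replace (A2 * (1 - phi)) with ((A2 - 0) - phi * A2) by ring. rewrite U2. ring. }
  replace A2 with (W / (1 - phi)) by (rewrite <- HA; field; auto).
  unfold W.
  unfold c. change (1 + zeta)%nat with (Datatypes.S zeta). rewrite S_INR.
  field. repeat split; auto; try lra.
Qed.

Theorem proposition4p4 (S : R) (zeta : nat) (phi : R)
  (hS : 0 < S) (hzeta : (zeta = 0 \/ zeta = 1)%nat) (hphi : -1 < phi < 1) :
  exists (Rad : R) (a : nat -> R) (f : R -> R),
    0 < Rad /\
    (forall x : R, -Rad < x < Rad ->
       regular S zeta phi x /\
       infinite_sum (fun n => u_sc S zeta phi n x) (f x) /\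
       Pser a x (f x)) /\
    (forall eps : R, 0 < eps -> exists delta : R, 0 < delta /\
       forall x : R, 0 < Rabs x < delta ->
         Rabs (f x - (x / (1 - phi)
                      + (1 / S) * ((1 + INR zeta) * phi
                                   / ((1 - phi) ^ 3 * (1 + phi))) * x ^ 2))
         <= eps * x ^ 2).
Proof.
  set (p := Rabs phi).
  assert (Hp : 0 <= p < 1) by (unfold p; split; [apply Rabs_pos | apply Rabs_def1; lra]).
  set (q := (1 + p) / 2). set (d := (1 - p) / 6). set (r := S * d * (1 - q)).
  assert (Hq : 0 < q < 1) by (unfold q; lra).
  assert (Hd : 0 <= d < 1) by (unfold d; lra).
  assert (Hd0 : 0 < d) by (unfold d; lra).
  assert (Hr : 0 < r) by (unfold r; apply Rmult_lt_0_compat; [apply Rmult_lt_0_compat|]; lra).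
  assert (Hphi : Rabs phi * (1 + d) ^ (1 + zeta) <= q).
  { fold p. destruct hzeta; subst zeta; simpl; unfold q, d.
    - nra.
    - assert (0 <= p * (1 - p)) by nra. nra. }
  assert (HrB : r / (1 - q) <= S * d) by (right; unfold r; field; lra).
  assert (HSd : S * d < S) by nra.
  pose proof (main_inv S zeta phi r q d hS Hr Hq Hd Hphi HrB) as Inv.
  destruct (limit_part S zeta phi r q d hS Hr Hq Hd Hphi HrB) as [HA [HT HL]].
  destruct (A_vals S zeta phi hS hphi (fun k => proj1 (HA k))) as [A0 [A1 A2]].
  exists r, (Acoef S zeta phi), (ev (Acoef S zeta phi)).
  split; auto. split.
  { intros x Hx. assert (Hx' : Rabs x < r) by (apply Rabs_def1; lra).
    destruct (HL x Hx') as [HPs HIs].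
    split; [|split; auto].
    - intros n E. destruct (Inv n) as [_ [HSn Hev]].
      destruct (Hev x (Rlt_le _ _ Hx')) as [_ Es].
      pose proof (ev_bd r _ _ x (Rlt_le _ _ Hx') HSn) as B. rewrite <- Es, E in B.
      rewrite Rabs_Ropp, Rabs_pos_eq in B by lra.
      assert (r * (1 - q ^ Datatypes.S n) / (1 - q) <= S * d).
      { eapply Rle_trans; [|exact HrB]. unfold Rdiv. apply Rmult_le_compat_r.
        apply Rlt_le, Rinv_0_lt_compat; lra. pose proof (pow_le q (Datatypes.S n)). nra. }
      lra.
    - unfold Pser. apply is_series_Reals. auto. }
  intros eps Heps.
  set (M := r / (1 - q)).
  assert (HM : 0 < M) by (unfold M; apply Rdiv_lt_0_compat; lra).
  exists (Rmin (r / 2) (eps * r ^ 3 / (2 * M))).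
  split. { apply Rmin_pos. lra. apply Rdiv_lt_0_compat. apply Rmult_lt_0_compat; auto. apply pow_lt; auto. lra. }
  intros x [Hx0 Hxd].
  assert (Hx1 : Rabs x <= r / 2) by (pose proof (Rmin_l (r / 2) (eps * r ^ 3 / (2 * M))); lra).
  assert (Hx2 : Rabs x <= eps * r ^ 3 / (2 * M)) by (pose proof (Rmin_r (r / 2) (eps * r ^ 3 / (2 * M))); lra).
  assert (Hxr : Rabs x < r) by lra.
  destruct (HL x Hxr) as [HPs _].
  set (rho := Rabs x / r).
  assert (Hrho : 0 <= rho <= 1 / 2).
  { unfold rho. split. apply Rmult_le_pos. apply Rabs_pos. apply Rlt_le, Rinv_0_lt_compat; auto.
    apply (Rmult_le_reg_r r); auto. unfold Rdiv. rewrite Rmult_assoc, Rinv_l; lra. }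
  assert (Htail : Rabs (Series (fun k => Acoef S zeta phi (3 + k) * x ^ (3 + k))) <= M * rho ^ 3 / (1 - 1 / 2)).
  { apply (geom_dom _ (M * rho ^ 3) (1 / 2)). lra.
    intro k. rewrite Rabs_mult, <- RPow_abs.
    eapply Rle_trans. apply Rmult_le_compat_r. apply pow_le, Rabs_pos. apply HA.
    fold M. rewrite pow_ratio by auto. fold rho. rewrite pow_add. rewrite Rmult_assoc.
    apply Rmult_le_compat_l. lra. apply Rmult_le_compat_l. apply pow_le; lra.
    apply pow_incr. lra. }
  assert (Hsplit : ev (Acoef S zeta phi) x =
     sum_f_R0 (fun k => Acoef S zeta phi k * x ^ k) 2 + Series (fun k => Acoef S zeta phi (3 + k) * x ^ (3 + k))).
  { unfold ev. apply (Series_incr_n (fun k => Acoef S zeta phi k * x ^ k) 3). lia. eexists; eauto. }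
  rewrite Hsplit. simpl sum_f_R0. rewrite A0, A1, A2.
  match goal with |- Rabs ?e <= _ => replace e with (Series (fun k => Acoef S zeta phi (3 + k) * x ^ (3 + k))) by (field; lra) end.
  eapply Rle_trans; [exact Htail|].
  assert (Hr3 : 0 < r ^ 3) by (apply pow_lt; auto).
  replace (M * rho ^ 3 / (1 - 1 / 2)) with ((2 * M / r ^ 3 * Rabs x) * Rabs x ^ 2)
    by (unfold rho; simpl; field; lra).
  rewrite pow2_abs. apply Rmult_le_compat_r. apply pow2_ge_0.
  apply (Rmult_le_reg_r (r ^ 3 / (2 * M))). apply Rdiv_lt_0_compat; lra.
  replace (2 * M / r ^ 3 * Rabs x * (r ^ 3 / (2 * M))) with (Rabs x) by (field; lra).
  replace (eps * (r ^ 3 / (2 * M))) with (eps * r ^ 3 / (2 * M)) by (field; lra). exact Hx2.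
Qed.
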